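(* If $(S,K,I)$ is a split graph, then the factor graph $\Phi(S)$ cannot contain an induced path $v_1v_2v_3v_4$ with $\sigma_{23}=1$ and $d_1\leq d_2\leq d_4$.
   Context: A split graph $(S,K,I)$ is a graph $S$ together with a fixed partition $V(S)=K\dot\cup I$, where $K$ is a clique and $I$ is an independent set. For a vertex $v_i$ of $S$, $N_i$ denotes its open neighborhood in $S$ and $d_i=|N_i|$; $\eta_{uv}=|N_u\cap N_v|$. The factor graph $\Phi(S)$ is the loopless multigraph with vertex set $I$ in which, for distinct $u,v\in I$, there is one edge joining $u$ and $v$ for each 2-switch of $S$ acting on $u$ and $v$ (a 2-switch replaces edges $ab,cd$ with $ac,bd$ when $ab,cd\in E(S)$ and $ac,bd\notin E(S)$); equivalently, the multiplicity of $uv$ is $\sigma_{uv}=(d_u-\eta_{uv})(d_v-\eta_{uv})$, and $u,v$ are adjacent iff $\sigma_{uv}>0$; $\sigma_{ij}$ denotes $\sigma_{v_iv_j}$. An induced path in $\Phi(S)$ consists of distinct vertices with consecutive ones adjacent and no other pair adjacent (multiplicities ignored). *)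

(* Defs.v *)
From mathcomp Require Import all_boot.
Set Implicit Arguments.
Unset Strict Implicit.
Unset Printing Implicit Defensive.

Definition simple_graph (T : finType) (e : rel T) : Prop :=
  symmetric e /\ irreflexive e.

Definition split_graph (T : finType) (e : rel T) (K I : {set T}) : Prop :=
  [/\ simple_graph e,
      K :|: I = [set: T],
      K :&: I = set0,
      {in K &, forall u v, u != v -> e u v} &
      {in I &, forall u v, ~~ e u v}].

Definition nbhd (T : finType) (e : rel T) (v : T) : {set T} := [set w | e v w].
Definition deg (T : finType) (e : rel T) (v : T) : nat := #|nbhd e v|.
Definition eta (T : finType) (e : rel T) (u v : T) : nat :=
  #|nbhd e u :&: nbhd e v|.

(* multiplicity of the edge uv of the factor graph Phi(S) *)
Definition sigma (T : finType) (e : rel T) (u v : T) : nat :=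
  (deg e u - eta e u v) * (deg e v - eta e u v).

(* adjacency in Phi(S) (vertex set I, loopless, multiplicities ignored) *)
Definition phi_adj (T : finType) (e : rel T) (I : {set T}) (u v : T) : bool :=
  [&& u \in I, v \in I, u != v & 0 < sigma e u v].

Definition phi_induced_P4 (T : finType) (e : rel T) (I : {set T})
  (v1 v2 v3 v4 : T) : Prop :=
  [/\ [/\ v1 \in I, v2 \in I, v3 \in I & v4 \in I],
      uniq [:: v1; v2; v3; v4],
      [/\ phi_adj e I v1 v2, phi_adj e I v2 v3 & phi_adj e I v3 v4] &
      [/\ ~~ phi_adj e I v1 v3, ~~ phi_adj e I v1 v4 & ~~ phi_adj e I v2 v4]].

(* Main.v *)
Require Import Defs.
From mathcomp Require Import all_boot.

Lemma degD (T : finType) (A B : {set T}) : #|A| - #|A :&: B| = #|A :\: B|.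
Proof. by rewrite -(cardsID B A) addKn. Qed.

Lemma sig_eq0 (T : finType) (e : rel T) u v :
  (sigma e u v == 0) = (nbhd e u \subset nbhd e v) || (nbhd e v \subset nbhd e u).
Proof.
rewrite /sigma /eta /deg muln_eq0 degD [nbhd e u :&: _]setIC degD.
by rewrite !cards_eq0 !setD_eq0.
Qed.

Theorem lemma4p5 (T : finType) (e : rel T) (K I : {set T}) :
  split_graph e K I ->
  ~ (exists v1 v2 v3 v4 : T,
       [/\ phi_induced_P4 e I v1 v2 v3 v4,
           sigma e v2 v3 = 1,
           deg e v1 <= deg e v2 &
           deg e v2 <= deg e v4]).
Proof.
move=> _ [v1 [v2 [v3 [v4 [[[i1 i2 i3 i4] U [a12 a23 a34] [n13 n14 n24]] s23 _ d24]]]]].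
move: U => /=; rewrite !inE !negb_or => /and4P [/and3P [ne12 ne13 ne14] /andP [ne23 ne24] ne34 _].
have adj u v : u \in I -> v \in I -> u != v ->
   phi_adj e I u v = ~~ ((nbhd e u \subset nbhd e v) || (nbhd e v \subset nbhd e u)).
  by move=> iu iv nuv; rewrite /phi_adj iu iv nuv -sig_eq0 lt0n.
rewrite adj // in a12; rewrite adj // in a23; rewrite adj // in a34.
rewrite adj // negbK in n13; rewrite adj // negbK in n14; rewrite adj // negbK in n24.
set A1 := nbhd e v1 in a12 n13 n14; set A2 := nbhd e v2 in a12 a23 n24 d24.
set A3 := nbhd e v3 in a23 a34 n13; set A4 := nbhd e v4 in a34 n14 n24 d24.
have s24 : A2 \subset A4.
  case/orP: n24 => // s42.
  have /eqP -> : A4 == A2 by rewrite eqEcard s42.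
  exact: subxx.
have s14 : A1 \subset A4.
  case/orP: n14 => // s41.
  by move: a12; rewrite (subset_trans s24 s41) orbT.
case/negP: a34; apply/orP; left.
case/orP: n13 => s; last by rewrite (subset_trans s s14).
move: s23; rewrite /sigma /eta /deg -/A2 -/A3 degD setIC degD.
move/eqP; rewrite muln_eq1 => /andP [_ /cards1P [b Eb]].
have /subsetPn [x x1 x2] : ~~ (A1 \subset A2) by move: a12; rewrite negb_or => /andP [].
have : x \in A3 :\: A2 by rewrite inE x2 (subsetP s).
rewrite Eb inE => /eqP xb.
apply/subsetP => y y3.
case: (boolP (y \in A2)) => y2; first exact: (subsetP s24).
have : y \in A3 :\: A2 by rewrite inE y2.
rewrite Eb inE => /eqP ->; rewrite -xb; exact: (subsetP s14).
Qed.
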